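(* Let $\Sigma\in\mathbb{M}(M,\mathbb{C})\otimes\mathbb{M}(N,\mathbb{C})$ be positive semidefinite and separable, and let $\{P_j\}_{j=1}^u$ be a resolution of identity in $\mathcal{C}_\Sigma$ consisting of minimal projections in $\mathcal{C}_\Sigma$. Then there exist $s\in\mathbb{N}$ and positive semidefinite matrices $R_1,\dots,R_s\in\mathbb{M}(M,\mathbb{C})$, $T_1,\dots,T_s\in\mathbb{M}(N,\mathbb{C})$ such that $\Sigma=\sum_{i=1}^s R_i\otimes T_i$ and $T_iP_j=P_jT_i$ for all $i\in\{1,\dots,s\}$ and $j\in\{1,\dots,u\}$.
   Context: We identify $\mathbb{M}(M,\mathbb{C})\otimes\mathbb{M}(N,\mathbb{C})$ with $\mathbb{M}(MN,\mathbb{C})$ via the Kronecker product, $(A\otimes B)_{(i,j),(l,m)}=A_{il}B_{jm}$. A positive semidefinite $\Sigma\in\mathbb{M}(M,\mathbb{C})\otimes\mathbb{M}(N,\mathbb{C})$ is called separable if it can be written as $\Sigma=\sum_{i=1}^n \tilde R_i\otimes\tilde T_i$ with all $\tilde R_i\in\mathbb{M}(M,\mathbb{C})$ and $\tilde T_i\in\mathbb{M}(N,\mathbb{C})$ positive semidefinite. The right commutant is $\mathcal{C}_\Sigma:=\{A\in\mathbb{M}(N,\mathbb{C}) : (\mathbf{1}_M\otimes A)\Sigma=\Sigma(\mathbf{1}_M\otimes A)\}$, a unital $*$-subalgebra of $\mathbb{M}(N,\mathbb{C})$. A projection means an orthogonal projection. A nonzero projection $P\in\mathcal{A}$ is minimal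 in a $*$-algebra $\mathcal{A}$ if every projection $Q\in\mathcal{A}$ with $Q\le P$ satisfies $Q=0$ or $Q=P$. A resolution of identity in $\mathcal{A}$ is a finite family of mutually orthogonal projections $P_i\in\mathcal{A}$ with $\sum_i P_i=\mathbf{1}_N$. *)

(* Defs.v *)
(* Complex scalars: an arbitrary numClosedFieldType C
   (e.g. complex numbers), with conjugation Num.conj. *)
From HB Require Import structures.
From mathcomp Require Import all_boot all_order all_algebra.
From mathcomp Require Export mxtens.
Set Implicit Arguments. Unset Strict Implicit. Unset Printing Implicit Defensive.
Import Order.TTheory GRing.Theory Num.Theory.
Local Open Scope ring_scope.

Definition adjmx (C : numClosedFieldType) m n (A : 'M[C]_(m, n)) : 'M[C]_(n, m) :=
  (map_mx Num.conj A)^T.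

Definition psd (C : numClosedFieldType) n (A : 'M[C]_n) : Prop :=
  adjmx A = A /\ forall v : 'cV[C]_n, 0 <= (adjmx v *m A *m v) 0 0.

(* Kronecker product: (A (x) B)_{(i,j),(l,m)} = A_{il} B_{jm},
   with (i,j) indexed as i*N + j (mathcomp real_closed mxtens). *)
Definition kron (C : numClosedFieldType) M N (A : 'M[C]_M) (B : 'M[C]_N)
  : 'M[C]_(M * N) := tensmx A B.

Definition separable (C : numClosedFieldType) M N (S : 'M[C]_(M * N)) : Prop :=
  exists (n : nat) (Rt : 'I_n -> 'M[C]_M) (Tt : 'I_n -> 'M[C]_N),
    (forall i, psd (Rt i)) /\ (forall i, psd (Tt i)) /\
    S = \sum_(i < n) kron (Rt i) (Tt i).

Definition in_commutant (C : numClosedFieldType) M N (S : 'M[C]_(M * N))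
  (A : 'M[C]_N) : Prop :=
  kron (1%:M : 'M[C]_M) A *m S = S *m kron (1%:M : 'M[C]_M) A.

Definition is_proj (C : numClosedFieldType) N (P : 'M[C]_N) : Prop :=
  P *m P = P /\ adjmx P = P.

Definition minimal_proj (C : numClosedFieldType) M N (S : 'M[C]_(M * N))
  (P : 'M[C]_N) : Prop :=
  in_commutant S P /\ is_proj P /\ P <> 0 /\
  forall Q : 'M[C]_N, in_commutant S Q -> is_proj Q -> psd (P - Q) ->
    Q = 0 \/ Q = P.

Definition resolution_of_identity (C : numClosedFieldType) M N
  (S : 'M[C]_(M * N)) (u : nat) (P : 'I_u -> 'M[C]_N) : Prop :=
  (forall j, in_commutant S (P j) /\ is_proj (P j)) /\
  (forall j k, j != k -> P j *m P k = 0) /\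
  \sum_(j < u) P j = 1%:M.

(* Main.v *)
Require Import Defs.
From HB Require Import structures.
From mathcomp Require Import all_boot all_order all_algebra.
Import Order.TTheory GRing.Theory Num.Theory.
Local Open Scope ring_scope.

Lemma adjmxM (C : numClosedFieldType) m n p (A : 'M[C]_(m,n)) (B : 'M[C]_(n,p)) :
  adjmx (A *m B) = adjmx B *m adjmx A.
Proof. by rewrite /adjmx map_mxM trmx_mul. Qed.

Lemma kron_sumr (C : numClosedFieldType) M N (A : 'M[C]_M) u (B : 'I_u -> 'M[C]_N) :
  kron A (\sum_(j < u) B j) = \sum_(j < u) kron A (B j).
Proof.
apply/matrixP => i k; rewrite /kron summxE !mxE summxE mulr_sumr.
by apply: eq_bigr => j _; rewrite !mxE.
Qed.

Lemma kron11 (C : numClosedFieldType) M N :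
  kron (1%:M : 'M[C]_M) (1%:M : 'M[C]_N) = 1%:M.
Proof.
apply/matrixP => i k; rewrite /kron.
case: (mxtens_indexP i) => a b; case: (mxtens_indexP k) => c d.
rewrite tensmxE !mxE (can_eq (@mxtens_indexK _ _)) xpair_eqE.
by rewrite -natrM mulnb.
Qed.

Lemma kron_mul (C : numClosedFieldType) M N (A B : 'M[C]_M) (X Y : 'M[C]_N) :
  kron A X *m kron B Y = kron (A *m B) (X *m Y).
Proof. exact: tensmx_mul. Qed.

Lemma psd_PTP (C : numClosedFieldType) N (P T : 'M[C]_N) :
  adjmx P = P -> psd T -> psd (P *m T *m P).
Proof.
move=> hP [hT1 hT2]; split; first by rewrite !adjmxM hP hT1 mulmxA.
move=> v; have := hT2 (P *m v).
by rewrite adjmxM hP !mulmxA.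
Qed.

Theorem lemma1 (C : numClosedFieldType) (M N : nat) (S : 'M[C]_(M * N))
  (u : nat) (P : 'I_u -> 'M[C]_N) :
  psd S -> separable S ->
  resolution_of_identity S P ->
  (forall j, minimal_proj S (P j)) ->
  exists (s : nat) (R : 'I_s -> 'M[C]_M) (T : 'I_s -> 'M[C]_N),
    (forall i, psd (R i)) /\ (forall i, psd (T i)) /\
    S = \sum_(i < s) kron (R i) (T i) /\
    (forall i j, T i *m P j = P j *m T i).
Proof.
move=> _ [n [Rt [Tt [hR [hT hS]]]]] [hP [hort hsum]] _.
pose E j := kron (1%:M : 'M[C]_M) (P j).
have EE j : E j *m E j = E j by rewrite /E kron_mul mulmx1 (proj1 (proj2 (hP j))).
have hS1 : S = \sum_(j < u) E j *m S *m E j.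
  transitivity (S *m \sum_(j < u) E j).
    by rewrite /E -kron_sumr hsum kron11 mulmx1.
  rewrite mulmx_sumr; apply: eq_bigr => j _.
  by rewrite -{1}EE mulmxA -(proj1 (hP j)).
pose F (p : 'I_u * 'I_n) := kron (Rt p.2) (P p.1 *m Tt p.2 *m P p.1).
have hS2 : S = \sum_(p : 'I_u * 'I_n) F p.
  rewrite (eq_bigr (fun p => F (p.1, p.2))); last by case.
  rewrite -(pair_big xpredT xpredT (fun a b => F (a, b))) /= hS1; apply: eq_bigr => j _.
  rewrite hS mulmx_sumr mulmx_suml; apply: eq_bigr => i _.
  by rewrite /E /F !kron_mul mul1mx mulmx1.
exists (u * n)%N, (fun t => Rt (mxtens_unindex t).2),
  (fun t => P (mxtens_unindex t).1 *m Tt (mxtens_unindex t).2 *m P (mxtens_unindex t).1).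
split => [t|]; first exact: hR.
split => [t|]; first by apply: psd_PTP; [exact: (proj2 (proj2 (hP _)))|exact: hT].
split.
  rewrite hS2 (reindex (@mxtens_unindex u n)) //.
  by exists (@mxtens_index u n) => x _; [apply: mxtens_unindexK|apply: mxtens_indexK].
move=> t j; set k := (mxtens_unindex t).1; set T := Tt _.
have Pk := proj1 (proj2 (hP k)).
case: (eqVneq j k) => [->|njk].
  by rewrite -mulmxA Pk -{1}Pk !mulmxA.
have hkj : k != j by rewrite eq_sym.
by rewrite -mulmxA (hort _ _ hkj) mulmx0 !mulmxA (hort _ _ njk) !mul0mx.
Qed.
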